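(* The function $h$ satisfies $h(\emptyset)=0$ and, for every nonempty finite $L\subseteq\mathbb{N}$, $$h(L)=1+\max_{M\in S(L)}\min\{h(L\cap M),\,h(L\cap(M-1))\},$$ where $S(L)$ is the set of all finite $M\subseteq\mathbb{N}$ with $M\neq L$ and $0<|M|\le|L|$.
   Context: $\mathbb{N}=\{0,1,2,\ldots\}$. For a finite $L\subseteq\mathbb{N}$ and an integer $r$, write $L+r:=\{x+r: x\in L,\ x+r\ge 0\}$ (so $L-1=\{x-1:x\in L, x\ge1\}$). Define $h$ on finite subsets of $\mathbb{N}$ recursively on $|L|$: $h(\emptyset)=0$, and for $L\neq\emptyset$, $$h(L)=1+\max\Big\{h(L\cap(L+1)),\ \max_{M\in T(L)}\min\{h(L\cap M),\,h(L\cap(M-1))\}\Big\},$$ where $T(L)$ is the set of all finite $M\subseteq\mathbb{N}$ with $M\notin\{L,L+1\}$ and $0<|M|\le|L|$ (all sets $L\cap(L+1)$, $L\cap M$, $L\cap(M-1)$ appearing here have size less than $|L|$, so the recursion is well defined). *)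

(* Defs.v *)
(* Finite subsets of N are represented canonically as
   strictly increasing sequences of naturals (sorted ltn). *)
From mathcomp Require Import all_boot.
Set Implicit Arguments. Unset Strict Implicit. Unset Printing Implicit Defensive.

Definition fsetN (L : seq nat) : bool := sorted ltn L.

Definition inter (L M : seq nat) : seq nat := [seq x <- L | x \in M].
Definition shift_up (L : seq nat) : seq nat := [seq x.+1 | x <- L].
Definition shift_down (M : seq nat) : seq nat := [seq x.-1 | x <- M & 0 < x].

Definition is_max (P : nat -> Prop) (m : nat) : Prop :=
  P m /\ forall k, P k -> k <= m.

(* values max-ed over in the defining recursion of h (with T(L)) *)
Definition rec_vals (f : seq nat -> nat) (L : seq nat) (k : nat) : Prop :=
  k = f (inter L (shift_up L)) \/
  exists M, [/\ fsetN M, M <> L, M <> shift_up L, 0 < size M <= size L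
     & k = minn (f (inter L M)) (f (inter L (shift_down M)))].

Definition is_h (f : seq nat -> nat) : Prop :=
  f [::] = 0 /\
  forall L, fsetN L -> L <> [::] ->
    exists m, is_max (rec_vals f L) m /\ f L = m.+1.

Definition S_vals (f : seq nat -> nat) (L : seq nat) (k : nat) : Prop :=
  exists M, [/\ fsetN M, M <> L, 0 < size M <= size L
     & k = minn (f (inter L M)) (f (inter L (shift_down M)))].

(* Main.v *)
Require Import Defs.
From mathcomp Require Import all_boot.
From Stdlib Require Import ClassicalEpsilon Classical FunctionalExtensionality PropExtensionality.

Lemma lt_inter (L X : seq nat) : ~~ all (fun x => x \in X) L -> size (inter L X) < size L.
Proof.
move=> h; rewrite /inter size_filter ltn_neqAle count_size andbT.
by rewrite -all_count.
Qed.

Lemma sorted_eq_of_sub (A B : seq nat) : sorted ltn A -> sorted ltn B ->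
  {subset A <= B} -> size B <= size A -> A = B.
Proof.
move=> sA sB sub sz.
have uA := sorted_uniq ltn_trans ltnn sA.
have [_ e] := uniq_min_size uA sub sz.
apply: (@irr_sorted_eq _ ltn) => //; [exact: ltn_trans | exact: ltnn].
Qed.

Lemma up_sorted L : fsetN L -> fsetN (shift_up L).
Proof. by rewrite /fsetN /shift_up sorted_map. Qed.

Lemma L1 L : fsetN L -> L <> [::] -> size (inter L (shift_up L)) < size L.
Proof.
case: L => [//|x l] sL _; apply: lt_inter.
apply/negP => /allP /(_ x (mem_head _ _)) /mapP [y yin ey].
have : x <= y.
  move: yin; rewrite inE => /orP [/eqP -> //|yl].
  have := order_path_min ltn_trans sL => /allP /(_ y yl); exact: ltnW.
by rewrite ey ltnn.
Qed.

Lemma L2 L M : fsetN L -> fsetN M -> M <> L -> size M <= size L ->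
  size (inter L M) < size L.
Proof.
move=> sL sM ne sz; apply: lt_inter; apply/negP => /allP sub.
by apply: ne; symmetry; apply: sorted_eq_of_sub.
Qed.

Lemma L3 L M : fsetN L -> fsetN M -> M <> shift_up L -> size M <= size L ->
  size (inter L (shift_down M)) < size L.
Proof.
move=> sL sM ne sz; apply: lt_inter; apply/negP => /allP sub.
apply: ne; symmetry; apply: sorted_eq_of_sub => //.
- exact: up_sorted.
- move=> y /mapP [x xL ->]; have := sub x xL.
  rewrite /shift_down => /mapP [z]; rewrite mem_filter => /andP [zp zM] ->.
  by rewrite prednK.
- by rewrite size_map.
Qed.

Lemma max_exists (P : nat -> Prop) a B : P a -> (forall k, P k -> k <= B) ->
  exists m, is_max P m.
Proof.
elim: B => [|B IH] Pa bnd.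
  exists 0; split; last by move=> k /bnd.
  by have := bnd a Pa; rewrite leqn0 => /eqP <-.
case: (classic (P B.+1)) => hB; first by exists B.+1.
apply: IH => // k Pk; have := bnd k Pk; rewrite leq_eqVlt => /orP [/eqP e|//].
by subst k.
Qed.

Lemma rec_bounded f L : exists B, forall k, rec_vals f L k -> k <= B.
Proof.
exists (\max_(t : (size L).-tuple bool) f (mask t L)).
have key : forall X, f (inter L X) <= \max_(t : (size L).-tuple bool) f (mask t L).
  move=> X; rewrite /inter filter_mask.
  have := @leq_bigmax _ (fun t : (size L).-tuple bool => f (mask t L))
           (map_tuple (fun x => x \in X) (in_tuple L)).
  by [].
move=> k [->|[M [_ _ _ _ ->]]]; first exact: key.
exact: leq_trans (geq_minl _ _) (key _).
Qed.

Lemma rec_nonempty f L : exists a, rec_vals f L a.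
Proof. by exists (f (inter L (shift_up L))); left. Qed.

Lemma rec_max f L : exists m, is_max (rec_vals f L) m.
Proof.
have [a Pa] := rec_nonempty f L; have [B hB] := rec_bounded f L.
exact: max_exists Pa hB.
Qed.

Lemma rec_ext1 f1 f2 L : fsetN L -> L <> [::] ->
  (forall s, size s < size L -> f1 s = f2 s) ->
  forall k, rec_vals f1 L k -> rec_vals f2 L k.
Proof.
move=> sL ne E k [->|[M [sM n1 n2 /andP [p sz] ->]]].
  by left; rewrite E //; apply: L1.
right; exists M; split => //; first by rewrite p.
by rewrite !E //; [apply: L3 | apply: L2].
Qed.

Lemma rec_ext f1 f2 L : fsetN L -> L <> [::] ->
  (forall s, size s < size L -> f1 s = f2 s) ->
  rec_vals f1 L = rec_vals f2 L.
Proof.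
move=> sL ne E; apply: functional_extensionality => k.
apply: propositional_extensionality; split; apply: rec_ext1 => // s hs.
by rewrite E.
Qed.

Definition pickmax (P : nat -> Prop) : nat := epsilon (inhabits 0) (is_max P).

Fixpoint g (n : nat) (L : seq nat) : nat :=
  match n with
  | 0 => 0
  | n'.+1 => if fsetN L && (L != [::]) then (pickmax (rec_vals (g n') L)).+1 else 0
  end.

Lemma g_step n s : size s <= n -> g n.+1 s = g n s.
Proof.
elim: n s => [|n IH] s.
  by case: s.
move=> hs /=; case: ifP => // /andP [fs /eqP ne]; congr (_.+1).
rewrite (@rec_ext (g n.+1) (g n)) // => t ht; apply: IH.
by rewrite -ltnS; apply: leq_trans hs.
Qed.

Lemma g_stable n s : size s <= n -> g n s = g (size s) s.
Proof.
elim: n s => [|n IH] s hs.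
  by move: hs; rewrite leqn0 => /eqP ->.
case: (ltngtP (size s) n.+1) hs => // [lt|-> //] _.
by rewrite g_step // IH.
Qed.

Definition h0 (L : seq nat) : nat := g (size L) L.

Lemma h0_is_h : is_h h0.
Proof.
split => // L sL ne.
case E: (size L) => [|n]; first by move/size0nil: E.
have Ev : rec_vals (g n) L = rec_vals h0 L.
  apply: rec_ext => // s; rewrite E ltnS => hs.
  by rewrite g_stable.
exists (pickmax (rec_vals h0 L)); split.
  by apply: epsilon_spec; apply: rec_max.
rewrite /h0 E /= sL; have -> : (L != [::]) by apply/eqP.
by rewrite Ev.
Qed.

Theorem proposition12 :
  (exists f, is_h f) /\
  forall f, is_h f ->
    f [::] = 0 /\
    forall L, fsetN L -> L <> [::] ->
      exists m, is_max (S_vals f L) m /\ f L = m.+1.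
Proof.
split; first by exists h0; exact: h0_is_h.
move=> f [f0 hf]; split => // L sL ne.
have [m [[Pm bnd] fL]] := hf L sL ne.
have dup : shift_down (shift_up L) = L.
  rewrite /shift_down /shift_up filter_map /=.
  have -> : [seq x <- L | preim succn (fun x => 0 < x) x] = L by apply/all_filterP/allP.
  by rewrite -map_comp map_id.
have iLL : inter L L = L by rewrite /inter; apply/all_filterP/allP.
have upne : shift_up L <> L.
  case E: L => [//|x l]; rewrite /shift_up /= => -[e _].
  by move/eqP: e; rewrite eqn_leq ltnn.
exists m; split => //; split.
  case: Pm => [em|[M [sM n1 n2 sz ek]]]; last by exists M.
  exists (shift_up L); split => //; first exact: up_sorted.
    by rewrite size_map lt0n size_eq0 leqnn andbT; apply/eqP.
  by rewrite dup iLL fL -em; apply/esym/minn_idPl; exact: leqnSn.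
move=> k [M [sM n1 sz ->]].
case: (eqVneq M (shift_up L)) => [eM|nM].
  rewrite eM dup iLL; apply: leq_trans (geq_minl _ _) _; apply: bnd; by left.
by apply: bnd; right; exists M; split => //; apply/eqP.
Qed.
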